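(* Let $\gamma>1$ be a constant, let $\Omega\subset\mathbb{R}^2$ be open, and let $\rho,u,v,p$ be smooth ($C^1$) functions of $(x,y,t)\in\Omega\times[0,T]$ with $\rho>0$ and $p>0$ that satisfy the compressible Euler equations in primitive form \begin{align*} \rho_t + u\rho_x + v\rho_y + \rho(u_x+v_y)&=0,\\ u_t + uu_x + vu_y + p_x/\rho&=0,\\ v_t + uv_x + vv_y + p_y/\rho&=0,\\ p_t + up_x + vp_y + \gamma p(u_x+v_y)&=0. \end{align*} Define $\Phi=(\phi_1,\phi_2,\phi_3,\phi_4)^T=(\sqrt{\rho},\sqrt{\rho}\,u,\sqrt{\rho}\,v,\sqrt{p})^T$ (so $u=\phi_2/\phi_1$, $v=\phi_3/\phi_1$). Then $\Phi$ satisfies $$\Phi_t+(A_1\Phi)_x+A_2\Phi_x+(B_1\Phi)_y+B_2\Phi_y=0,$$ where $$A_1=\frac12\begin{bmatrix}u&0&0&0\\0&u&0&0\\0&0&u&0\\0&2(\gamma-1)\frac{\phi_4}{\phi_1}&0&(2-\gamma)u\end{bmatrix},\quad A_2=\frac12\begin{bmatrix}u&0&0&0\\0&u&0&4\frac{\phi_4}{\phi_1}\\0&0&u&0\\0&0&0&(2-\gamma)u\end{bmatrix},$$ $$B_1=\frac12\begin{bmatrix}v&0&0&0\\0&v&0&0\\0&0&v&0\\0&0&2(\gamma-1)\frac{\phi_4}{\phi_1}&(2-\gamma)v\end{bmatrix},\quad B_2=\frac12\begin{bmatrix}v&0&0&0\\0&v&0&0\\0&0&v&4\frac{\phi_4}{\phi_1}\\0&0&0&(2-\gamma)v\end{bmatrix}.$$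 Moreover, for every constant $\alpha^2>0$ and $P=\mathrm{diag}(\alpha^2,\tfrac{\gamma-1}{2},\tfrac{\gamma-1}{2},1)$, which is symmetric positive definite, one has $PA_2=(PA_1)^T$ and $PB_2=(PB_1)^T$. *)

(* Defs.v *)
From Stdlib Require Import Reals Lra.
Open Scope R_scope.

Definition open2 (Om : R -> R -> Prop) : Prop :=
  forall x y, Om x y -> exists r, 0 < r /\
    forall x' y', Rabs (x' - x) < r -> Rabs (y' - y) < r -> Om x' y'.

(* derivative of g at s relative to the set D (D = everything: usual
   derivative; D = [0,T]: one-sided at the endpoints). *)
Definition deriv_within (D : R -> Prop) (g : R -> R) (s l : R) : Prop :=
  forall eps, 0 < eps -> exists delta, 0 < delta /\
    forall h, D h -> h <> s -> Rabs (h - s) < delta ->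
      Rabs ((g h - g s) / (h - s) - l) < eps.

Definition Tint (T : R) : R -> Prop := fun t => 0 <= t <= T.

Definition dom (Om : R -> R -> Prop) (T : R) (x y t : R) : Prop :=
  Om x y /\ 0 <= t <= T.

Definition pd_x (F : R -> R -> R -> R) (x y t l : R) : Prop :=
  deriv_within (fun _ => True) (fun s => F s y t) x l.
Definition pd_y (F : R -> R -> R -> R) (x y t l : R) : Prop :=
  deriv_within (fun _ => True) (fun s => F x s t) y l.
Definition pd_t (T : R) (F : R -> R -> R -> R) (x y t l : R) : Prop :=
  deriv_within (Tint T) (fun s => F x y s) t l.

Definition cont_on (Om : R -> R -> Prop) (T : R) (F : R -> R -> R -> R) : Prop :=
  forall x y t, dom Om T x y t -> forall eps, 0 < eps -> exists delta, 0 < delta /\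
    forall x' y' t', dom Om T x' y' t' -> Rabs (x' - x) < delta ->
      Rabs (y' - y) < delta -> Rabs (t' - t) < delta ->
      Rabs (F x' y' t' - F x y t) < eps.

Definition C1_on (Om : R -> R -> Prop) (T : R) (F Fx Fy Ft : R -> R -> R -> R) : Prop :=
  (forall x y t, dom Om T x y t ->
     pd_x F x y t (Fx x y t) /\ pd_y F x y t (Fy x y t) /\ pd_t T F x y t (Ft x y t))
  /\ cont_on Om T F /\ cont_on Om T Fx /\ cont_on Om T Fy /\ cont_on Om T Ft.

(* 4-vectors and 4x4 matrices, indexed by 0..3 *)
Definition vec4 := nat -> R.
Definition mat4 := nat -> nat -> R.

Definition mxv (A : mat4) (w : vec4) : vec4 :=
  fun i => A i 0%nat * w 0%nat + A i 1%nat * w 1%nat + A i 2%nat * w 2%nat + A i 3%nat * w 3%nat.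
Definition mxm (A B : mat4) : mat4 :=
  fun i j => A i 0%nat * B 0%nat j + A i 1%nat * B 1%nat j + A i 2%nat * B 2%nat j + A i 3%nat * B 3%nat j.
Definition trm (A : mat4) : mat4 := fun i j => A j i.

Definition Phi (rho u v p : R -> R -> R -> R) (x y t : R) : vec4 :=
  fun i => match i with
           | 0%nat => sqrt (rho x y t)
           | 1%nat => sqrt (rho x y t) * u x y t
           | 2%nat => sqrt (rho x y t) * v x y t
           | _ => sqrt (p x y t)
           end.

Definition A1mat (g : R) (f : vec4) : mat4 := fun i j =>
  let u := f 1%nat / f 0%nat in
  / 2 * match i, j with
        | 0%nat, 0%nat => u | 1%nat, 1%nat => u | 2%nat, 2%nat => u
        | 3%nat, 1%nat => 2 * (g - 1) * (f 3%nat / f 0%nat)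
        | 3%nat, 3%nat => (2 - g) * u
        | _, _ => 0 end.
Definition A2mat (g : R) (f : vec4) : mat4 := fun i j =>
  let u := f 1%nat / f 0%nat in
  / 2 * match i, j with
        | 0%nat, 0%nat => u | 1%nat, 1%nat => u | 2%nat, 2%nat => u
        | 1%nat, 3%nat => 4 * (f 3%nat / f 0%nat)
        | 3%nat, 3%nat => (2 - g) * u
        | _, _ => 0 end.
Definition B1mat (g : R) (f : vec4) : mat4 := fun i j =>
  let v := f 2%nat / f 0%nat in
  / 2 * match i, j with
        | 0%nat, 0%nat => v | 1%nat, 1%nat => v | 2%nat, 2%nat => v
        | 3%nat, 2%nat => 2 * (g - 1) * (f 3%nat / f 0%nat)
        | 3%nat, 3%nat => (2 - g) * v
        | _, _ => 0 end.
Definition B2mat (g : R) (f : vec4) : mat4 := fun i j =>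
  let v := f 2%nat / f 0%nat in
  / 2 * match i, j with
        | 0%nat, 0%nat => v | 1%nat, 1%nat => v | 2%nat, 2%nat => v
        | 2%nat, 3%nat => 4 * (f 3%nat / f 0%nat)
        | 3%nat, 3%nat => (2 - g) * v
        | _, _ => 0 end.

Definition Pmat (g alpha2 : R) : mat4 := fun i j =>
  match i, j with
  | 0%nat, 0%nat => alpha2
  | 1%nat, 1%nat => (g - 1) / 2
  | 2%nat, 2%nat => (g - 1) / 2
  | 3%nat, 3%nat => 1
  | _, _ => 0 end.

Definition mat_eq (A B : mat4) : Prop := forall i j, (i < 4)%nat -> (j < 4)%nat -> A i j = B i j.
Definition symmetric4 (A : mat4) : Prop := mat_eq A (trm A).
Definition posdef4 (A : mat4) : Prop :=
  forall w : vec4, (exists i, (i < 4)%nat /\ w i <> 0) ->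
    0 < w 0%nat * mxv A w 0%nat + w 1%nat * mxv A w 1%nat + w 2%nat * mxv A w 2%nat + w 3%nat * mxv A w 3%nat.

(* Main.v *)
Require Import Defs.
From Stdlib Require Import Reals Lra Lia.
Open Scope R_scope.

Definition DQ (g : R -> R) (s h : R) := (g h - g s) / (h - s).

Lemma dw_lim D g s l : deriv_within D g s l <->
  limit1_in (DQ g s) (fun h => D h /\ h <> s) l s.
Proof.
  unfold deriv_within, limit1_in, limit_in, DQ; simpl; unfold R_dist; split.
  - intros H eps He. destruct (H eps He) as [d [Hd H']]. exists d. split; [lra|].
    intros h [[Dh Hne] Hh]. apply H'; auto.
  - intros H eps He. destruct (H eps He) as [d [Hd H']]. exists d. split; [lra|].
    intros h Dh Hne Hh. apply H'; auto.
Qed.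

Lemma lim_ext f1 f2 D l s : (forall h, D h -> f1 h = f2 h) ->
  limit1_in f2 D l s -> limit1_in f1 D l s.
Proof.
  unfold limit1_in, limit_in; intros E H eps He. destruct (H eps He) as [d [Hd H']].
  exists d; split; auto. intros h [Dh Hh]. rewrite E; auto.
Qed.

Lemma dw_ext_val D g s l l' : deriv_within D g s l -> l = l' -> deriv_within D g s l'.
Proof. intros H ->; exact H. Qed.

Lemma dw_local_ext D g g' s l :
  (exists r, 0 < r /\ forall h, D h -> Rabs (h - s) < r -> g h = g' h) -> g s = g' s ->
  deriv_within D g' s l -> deriv_within D g s l.
Proof.
  intros [r [Hr E]] Es H eps He. destruct (H eps He) as [d [Hd H']].
  exists (Rmin d r). split. apply Rmin_pos; auto.
  intros h Dh Hne Hh. rewrite E, Es; auto. apply H'; auto.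
  apply Rlt_le_trans with (1 := Hh); apply Rmin_l.
  apply Rlt_le_trans with (1 := Hh); apply Rmin_r.
Qed.

Lemma dw_const D c s : deriv_within D (fun _ => c) s 0.
Proof.
  intros eps He. exists 1. split; [lra|]. intros h _ Hne _.
  replace ((c - c) / (h - s) - 0) with 0. rewrite Rabs_R0; lra.
  field. lra.
Qed.

Lemma dw_cont D g s l : deriv_within D g s l ->
  forall eps, 0 < eps -> exists d, 0 < d /\ forall h, D h -> Rabs (h - s) < d -> Rabs (g h - g s) < eps.
Proof.
  intros H eps He. destruct (H 1 ltac:(lra)) as [d [Hd H']].
  assert (Hl : 0 < Rabs l + 1) by (pose proof (Rabs_pos l); lra).
  exists (Rmin d (eps / (Rabs l + 1))). split.
  apply Rmin_pos; auto. apply Rdiv_lt_0_compat; auto.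
  intros h Dh Hh. destruct (Req_dec h s) as [->|Hne].
  - replace (g s - g s) with 0 by ring. rewrite Rabs_R0; lra.
  - assert (Hh1 : Rabs (h - s) < d) by (apply Rlt_le_trans with (1 := Hh); apply Rmin_l).
    assert (Hh2 : Rabs (h - s) < eps / (Rabs l + 1)) by (apply Rlt_le_trans with (1 := Hh); apply Rmin_r).
    specialize (H' h Dh Hne Hh1).
    assert (E : g h - g s = ((g h - g s) / (h - s)) * (h - s)) by (field; lra).
    rewrite E, Rabs_mult.
    assert (Rabs ((g h - g s) / (h - s)) <= Rabs l + 1).
    { pose proof (Rabs_triang_inv ((g h - g s) / (h - s)) l). lra. }
    assert (0 < Rabs (h - s)) by (apply Rabs_pos_lt; lra).
    apply Rle_lt_trans with ((Rabs l + 1) * Rabs (h - s)).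
    apply Rmult_le_compat_r; lra.
    apply Rmult_lt_reg_r with (/ (Rabs l + 1)). apply Rinv_0_lt_compat; lra.
    replace ((Rabs l + 1) * Rabs (h - s) * / (Rabs l + 1)) with (Rabs (h - s)) by (field; lra).
    unfold Rdiv in Hh2. lra.
Qed.

Lemma cont_lim D g s l : deriv_within D g s l ->
  limit1_in g (fun h => D h /\ h <> s) (g s) s.
Proof.
  intros H. unfold limit1_in, limit_in; simpl; unfold R_dist. intros eps He.
  destruct (dw_cont D g s l H eps He) as [d [Hd H']]. exists d; split; [lra|].
  intros h [[Dh _] Hh]. apply H'; auto.
Qed.

Lemma lim_const (c : R) D s : limit1_in (fun _ => c) D c s.
Proof.
  unfold limit1_in, limit_in; simpl; unfold R_dist. intros eps He. exists 1. split; [lra|].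
  intros. replace (c - c) with 0 by ring. rewrite Rabs_R0; lra.
Qed.

Lemma dw_plus D f g s l1 l2 : deriv_within D f s l1 -> deriv_within D g s l2 ->
  deriv_within D (fun h => f h + g h) s (l1 + l2).
Proof.
  rewrite !dw_lim. intros H1 H2.
  apply lim_ext with (fun h => DQ f s h + DQ g s h).
  { intros h [_ Hne]. unfold DQ. field. lra. }
  apply limit_plus; auto.
Qed.

Lemma dw_mult D f g s l1 l2 : deriv_within D f s l1 -> deriv_within D g s l2 ->
  deriv_within D (fun h => f h * g h) s (l1 * g s + f s * l2).
Proof.
  intros H1 H2. pose proof (cont_lim _ _ _ _ H1) as C1.
  rewrite dw_lim in *.
  apply lim_ext with (fun h => DQ f s h * g s + f h * DQ g s h).
  { intros h [_ Hne]. unfold DQ. field. lra. }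
  apply limit_plus. apply limit_mul; auto. apply lim_const.
  apply limit_mul; auto.
Qed.

Lemma dw_chain D g s l F F' : deriv_within D g s l -> derivable_pt_lim F (g s) F' ->
  deriv_within D (fun h => F (g h)) s (F' * l).
Proof.
  intros H HF.
  set (phi := fun y => if Req_dec_T y (g s) then F' else (F y - F (g s)) / (y - g s)).
  assert (Hphi : limit1_in (fun h => phi (g h)) (fun h => D h /\ h <> s) F' s).
  { unfold limit1_in, limit_in; simpl; unfold R_dist. intros eps He.
    destruct (HF eps He) as [[d0 Hd0] H0]. simpl in H0.
    destruct (dw_cont D g s l H d0 Hd0) as [d [Hd Hc]].
    exists d; split; [lra|]. intros h [[Dh _] Hh]. unfold phi.
    destruct (Req_dec_T (g h) (g s)) as [E|E].
    - replace (F' - F') with 0 by ring. rewrite Rabs_R0; lra.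
    - specialize (H0 (g h - g s) ltac:(lra) (Hc h Dh Hh)).
      replace (g s + (g h - g s)) with (g h) in H0 by ring. exact H0. }
  rewrite dw_lim in *.
  apply lim_ext with (fun h => phi (g h) * DQ g s h).
  { intros h [_ Hne]. unfold DQ, phi.
    destruct (Req_dec_T (g h) (g s)) as [E|E].
    - rewrite E. field. lra.
    - field. lra. }
  apply limit_mul; auto.
Qed.

Lemma dw_sqrt D f s l : deriv_within D f s l -> 0 < f s ->
  deriv_within D (fun h => sqrt (f h)) s (/ (2 * sqrt (f s)) * l).
Proof.
  intros H Hp. apply dw_chain; auto. apply derivable_pt_lim_sqrt; auto.
Qed.

Definition Phi1 (Rf Uf Vf Pf : R -> R) (h : R) : vec4 := fun i =>
  match i with 0%nat => sqrt (Rf h) | 1%nat => sqrt (Rf h) * Uf h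
  | 2%nat => sqrt (Rf h) * Vf h | _ => sqrt (Pf h) end.

Definition dPhi (r q u v Rd Ud Vd Pd : R) (i : nat) : R :=
  match i with 0%nat => Rd / (2 * r) | 1%nat => Rd / (2 * r) * u + r * Ud
  | 2%nat => Rd / (2 * r) * v + r * Vd | _ => Pd / (2 * q) end.
Definition dA1 (g r q u v Rd Ud Vd Pd : R) (i : nat) : R :=
  match i with 0%nat => / 2 * (Ud * r + u * (Rd / (2 * r)))
  | 1%nat => / 2 * (2 * u * Ud * r + u * u * (Rd / (2 * r)))
  | 2%nat => / 2 * ((Ud * v + u * Vd) * r + u * v * (Rd / (2 * r)))
  | _ => / 2 * g * (Ud * q + u * (Pd / (2 * q))) end.
Definition dB1 (g r q u v Rd Ud Vd Pd : R) (i : nat) : R :=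
  match i with 0%nat => / 2 * (Vd * r + v * (Rd / (2 * r)))
  | 1%nat => / 2 * ((Vd * u + v * Ud) * r + v * u * (Rd / (2 * r)))
  | 2%nat => / 2 * (2 * v * Vd * r + v * v * (Rd / (2 * r)))
  | _ => / 2 * g * (Vd * q + v * (Pd / (2 * q))) end.

Lemma lt4 i : (i < 4)%nat -> i = 0%nat \/ i = 1%nat \/ i = 2%nat \/ i = 3%nat.
Proof. lia. Qed.

Ltac dsolve := repeat (first [apply dw_const | apply dw_mult | apply dw_plus | apply dw_sqrt | eassumption]).

Lemma gen (g : R) D s Rf Uf Vf Pf Rd Ud Vd Pd :
  deriv_within D Rf s Rd -> deriv_within D Uf s Ud -> deriv_within D Vf s Vd ->
  deriv_within D Pf s Pd -> 0 < Rf s -> 0 < Pf s ->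
  (exists r, 0 < r /\ forall h, D h -> Rabs (h - s) < r -> 0 < Rf h) ->
  forall i, (i < 4)%nat ->
  deriv_within D (fun h => Phi1 Rf Uf Vf Pf h i) s
     (dPhi (sqrt (Rf s)) (sqrt (Pf s)) (Uf s) (Vf s) Rd Ud Vd Pd i) /\
  deriv_within D (fun h => mxv (A1mat g (Phi1 Rf Uf Vf Pf h)) (Phi1 Rf Uf Vf Pf h) i) s
     (dA1 g (sqrt (Rf s)) (sqrt (Pf s)) (Uf s) (Vf s) Rd Ud Vd Pd i) /\
  deriv_within D (fun h => mxv (B1mat g (Phi1 Rf Uf Vf Pf h)) (Phi1 Rf Uf Vf Pf h) i) s
     (dB1 g (sqrt (Rf s)) (sqrt (Pf s)) (Uf s) (Vf s) Rd Ud Vd Pd i).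
Proof.
  intros HR HU HV HP Rs Ps [r0 [Hr0 Hloc]] i Hi.
  assert (sR : 0 < sqrt (Rf s)) by (apply sqrt_lt_R0; auto).
  assert (sP : 0 < sqrt (Pf s)) by (apply sqrt_lt_R0; auto).
  assert (LOC : forall G G' : R -> R, (forall h, 0 < Rf h -> G h = G' h) ->
     exists r, 0 < r /\ forall h, D h -> Rabs (h - s) < r -> G h = G' h).
  { intros G G' E. exists r0. split; auto. }
  destruct (lt4 i Hi) as [E|[E|[E|E]]]; subst i; unfold Phi1, mxv, A1mat, B1mat, dPhi, dA1, dB1; simpl.
  - split; [|split].
    + eapply dw_ext_val. dsolve. cbv beta. field. lra.
    + apply dw_local_ext with (fun h => / 2 * (Uf h * sqrt (Rf h))).
      { apply LOC. intros h Hh. assert (0 < sqrt (Rf h)) by (apply sqrt_lt_R0; auto). field; lra. }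
      { field; lra. }
      eapply dw_ext_val. dsolve. cbv beta. field. lra.
    + apply dw_local_ext with (fun h => / 2 * (Vf h * sqrt (Rf h))).
      { apply LOC. intros h Hh. assert (0 < sqrt (Rf h)) by (apply sqrt_lt_R0; auto). field; lra. }
      { field; lra. }
      eapply dw_ext_val. dsolve. cbv beta. field. lra.
  - split; [|split].
    + eapply dw_ext_val. dsolve. cbv beta. field. lra.
    + apply dw_local_ext with (fun h => / 2 * ((Uf h * Uf h) * sqrt (Rf h))).
      { apply LOC. intros h Hh. assert (0 < sqrt (Rf h)) by (apply sqrt_lt_R0; auto). field; lra. }
      { field; lra. }
      eapply dw_ext_val. dsolve. cbv beta. field. lra.
    + apply dw_local_ext with (fun h => / 2 * ((Vf h * Uf h) * sqrt (Rf h))).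
      { apply LOC. intros h Hh. assert (0 < sqrt (Rf h)) by (apply sqrt_lt_R0; auto). field; lra. }
      { field; lra. }
      eapply dw_ext_val. dsolve. cbv beta. field. lra.
  - split; [|split].
    + eapply dw_ext_val. dsolve. cbv beta. field. lra.
    + apply dw_local_ext with (fun h => / 2 * ((Uf h * Vf h) * sqrt (Rf h))).
      { apply LOC. intros h Hh. assert (0 < sqrt (Rf h)) by (apply sqrt_lt_R0; auto). field; lra. }
      { field; lra. }
      eapply dw_ext_val. dsolve. cbv beta. field. lra.
    + apply dw_local_ext with (fun h => / 2 * ((Vf h * Vf h) * sqrt (Rf h))).
      { apply LOC. intros h Hh. assert (0 < sqrt (Rf h)) by (apply sqrt_lt_R0; auto). field; lra. }
      { field; lra. }
      eapply dw_ext_val. dsolve. cbv beta. field. lra.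
  - split; [|split].
    + eapply dw_ext_val. dsolve. cbv beta. field. lra.
    + apply dw_local_ext with (fun h => / 2 * g * (Uf h * sqrt (Pf h))).
      { apply LOC. intros h Hh. assert (0 < sqrt (Rf h)) by (apply sqrt_lt_R0; auto). field; lra. }
      { field; lra. }
      eapply dw_ext_val. dsolve. cbv beta. field. lra.
    + apply dw_local_ext with (fun h => / 2 * g * (Vf h * sqrt (Pf h))).
      { apply LOC. intros h Hh. assert (0 < sqrt (Rf h)) by (apply sqrt_lt_R0; auto). field; lra. }
      { field; lra. }
      eapply dw_ext_val. dsolve. cbv beta. field. lra.
Qed.
Theorem mainTheorem1
  (gamma : R) (Hgamma : 1 < gamma)
  (Om : R -> R -> Prop) (HOm : open2 Om) (T : R) (HT : 0 < T)
  (rho u v p rho_x rho_y rho_t u_x u_y u_t v_x v_y v_t p_x p_y p_t : R -> R -> R -> R)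
  (Hrho : C1_on Om T rho rho_x rho_y rho_t)
  (Hu : C1_on Om T u u_x u_y u_t)
  (Hv : C1_on Om T v v_x v_y v_t)
  (Hp : C1_on Om T p p_x p_y p_t)
  (Hrho_pos : forall x y t, dom Om T x y t -> 0 < rho x y t)
  (Hp_pos : forall x y t, dom Om T x y t -> 0 < p x y t)
  (E1 : forall x y t, dom Om T x y t ->
     rho_t x y t + u x y t * rho_x x y t + v x y t * rho_y x y t
     + rho x y t * (u_x x y t + v_y x y t) = 0)
  (E2 : forall x y t, dom Om T x y t ->
     u_t x y t + u x y t * u_x x y t + v x y t * u_y x y t + p_x x y t / rho x y t = 0)
  (E3 : forall x y t, dom Om T x y t ->
     v_t x y t + u x y t * v_x x y t + v x y t * v_y x y t + p_y x y t / rho x y t = 0)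
  (E4 : forall x y t, dom Om T x y t ->
     p_t x y t + u x y t * p_x x y t + v x y t * p_y x y t
     + gamma * p x y t * (u_x x y t + v_y x y t) = 0) :
  (forall x y t, dom Om T x y t ->
     exists Pt Px Py Fx Fy : nat -> R,
       (forall i, (i < 4)%nat ->
          pd_t T (fun a b c => Phi rho u v p a b c i) x y t (Pt i) /\
          pd_x (fun a b c => Phi rho u v p a b c i) x y t (Px i) /\
          pd_y (fun a b c => Phi rho u v p a b c i) x y t (Py i) /\
          pd_x (fun a b c => mxv (A1mat gamma (Phi rho u v p a b c)) (Phi rho u v p a b c) i)
               x y t (Fx i) /\
          pd_y (fun a b c => mxv (B1mat gamma (Phi rho u v p a b c)) (Phi rho u v p a b c) i)
               x y t (Fy i)) /\
       (forall i, (i < 4)%nat ->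
          Pt i + Fx i + mxv (A2mat gamma (Phi rho u v p x y t)) Px i
          + Fy i + mxv (B2mat gamma (Phi rho u v p x y t)) Py i = 0))
  /\
  (forall alpha2 : R, 0 < alpha2 ->
     symmetric4 (Pmat gamma alpha2) /\ posdef4 (Pmat gamma alpha2) /\
     (forall x y t, dom Om T x y t ->
        mat_eq (mxm (Pmat gamma alpha2) (A2mat gamma (Phi rho u v p x y t)))
               (trm (mxm (Pmat gamma alpha2) (A1mat gamma (Phi rho u v p x y t)))) /\
        mat_eq (mxm (Pmat gamma alpha2) (B2mat gamma (Phi rho u v p x y t)))
               (trm (mxm (Pmat gamma alpha2) (B1mat gamma (Phi rho u v p x y t)))))).
Proof.
  split.
  - intros x y t Hd.
    destruct Hrho as [DR _]. destruct Hu as [DU _]. destruct Hv as [DV _]. destruct Hp as [DP _].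
    destruct (DR x y t Hd) as [Rx [Ry Rt]]. destruct (DU x y t Hd) as [Ux [Uy Ut]].
    destruct (DV x y t Hd) as [Vx [Vy Vt]]. destruct (DP x y t Hd) as [Px [Py Pt]].
    pose proof (Hrho_pos x y t Hd) as rpos. pose proof (Hp_pos x y t Hd) as ppos.
    destruct Hd as [HOxy Ht].
    destruct (HOm x y HOxy) as [r0 [Hr0 Hr0']].
    set (sr := sqrt (rho x y t)). set (sq := sqrt (p x y t)).
    exists (dPhi sr sq (u x y t) (v x y t) (rho_t x y t) (u_t x y t) (v_t x y t) (p_t x y t)).
    exists (dPhi sr sq (u x y t) (v x y t) (rho_x x y t) (u_x x y t) (v_x x y t) (p_x x y t)).
    exists (dPhi sr sq (u x y t) (v x y t) (rho_y x y t) (u_y x y t) (v_y x y t) (p_y x y t)).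
    exists (dA1 gamma sr sq (u x y t) (v x y t) (rho_x x y t) (u_x x y t) (v_x x y t) (p_x x y t)).
    exists (dB1 gamma sr sq (u x y t) (v x y t) (rho_y x y t) (u_y x y t) (v_y x y t) (p_y x y t)).
    split.
    + intros i Hi.
      assert (LT : exists r, 0 < r /\ forall h, Tint T h -> Rabs (h - t) < r -> 0 < rho x y h).
      { exists 1. split; [lra|]. intros h Hh _. apply Hrho_pos. split; auto. }
      assert (LX : exists r, 0 < r /\ forall h, (fun _ => True) h -> Rabs (h - x) < r -> 0 < rho h y t).
      { exists r0. split; auto. intros h _ Hh. apply Hrho_pos. split; auto.
        apply Hr0'; auto. replace (y - y) with 0 by ring. rewrite Rabs_R0; lra. }
      assert (LY : exists r, 0 < r /\ forall h, (fun _ => True) h -> Rabs (h - y) < r -> 0 < rho x h t).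
      { exists r0. split; auto. intros h _ Hh. apply Hrho_pos. split; auto.
        apply Hr0'; auto. replace (x - x) with 0 by ring. rewrite Rabs_R0; lra. }
      pose proof (gen gamma (Tint T) t (fun s => rho x y s) (fun s => u x y s) (fun s => v x y s)
                    (fun s => p x y s) _ _ _ _ Rt Ut Vt Pt rpos ppos LT i Hi) as [GT1 _].
      pose proof (gen gamma (fun _ => True) x (fun s => rho s y t) (fun s => u s y t) (fun s => v s y t)
                    (fun s => p s y t) _ _ _ _ Rx Ux Vx Px rpos ppos LX i Hi) as [GX1 [GX2 _]].
      pose proof (gen gamma (fun _ => True) y (fun s => rho x s t) (fun s => u x s t) (fun s => v x s t)
                    (fun s => p x s t) _ _ _ _ Ry Uy Vy Py rpos ppos LY i Hi) as [GY1 [_ GY3]].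
      repeat split; assumption.
    + assert (Hd : dom Om T x y t) by (split; auto).
      assert (e1 : rho_t x y t = - (u x y t * rho_x x y t + v x y t * rho_y x y t
                     + rho x y t * (u_x x y t + v_y x y t))) by (pose proof (E1 x y t Hd); lra).
      assert (e2 : u_t x y t = - (u x y t * u_x x y t + v x y t * u_y x y t + p_x x y t / rho x y t))
        by (pose proof (E2 x y t Hd); lra).
      assert (e3 : v_t x y t = - (u x y t * v_x x y t + v x y t * v_y x y t + p_y x y t / rho x y t))
        by (pose proof (E3 x y t Hd); lra).
      assert (e4 : p_t x y t = - (u x y t * p_x x y t + v x y t * p_y x y t
                     + gamma * p x y t * (u_x x y t + v_y x y t))) by (pose proof (E4 x y t Hd); lra).
      assert (Hsr : sr * sr = rho x y t) by (apply sqrt_sqrt; lra).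
      assert (Hsq : sq * sq = p x y t) by (apply sqrt_sqrt; lra).
      assert (sr0 : 0 < sr) by (apply sqrt_lt_R0; auto).
      assert (sq0 : 0 < sq) by (apply sqrt_lt_R0; auto).
      intros i Hi.
      destruct (lt4 i Hi) as [E|[E|[E|E]]]; subst i;
        unfold dPhi, dA1, dB1, mxv, A2mat, B2mat, Phi; simpl;
        rewrite ?e1, ?e2, ?e3, ?e4; fold sr; fold sq; rewrite <- ?Hsr, <- ?Hsq;
        field; lra.
  - intros alpha2 Ha. split; [|split].
    + intros i j Hi Hj. unfold trm, Pmat.
      destruct (lt4 i Hi) as [E|[E|[E|E]]]; destruct (lt4 j Hj) as [E'|[E'|[E'|E']]]; subst; reflexivity.
    + intros w [i [Hi Hw]]. unfold mxv, Pmat.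
      assert (0 < w i * w i) by (destruct (Rtotal_order (w i) 0) as [H|[H|H]]; nra).
      assert (0 <= w 0%nat * w 0%nat) by nra. assert (0 <= w 1%nat * w 1%nat) by nra.
      assert (0 <= w 2%nat * w 2%nat) by nra. assert (0 <= w 3%nat * w 3%nat) by nra.
      destruct (lt4 i Hi) as [E|[E|[E|E]]]; subst; nra.
    + intros x y t Hd. assert (0 < sqrt (rho x y t)) by (apply sqrt_lt_R0; auto). split; intros i j Hi Hj; unfold trm, mxm, Pmat, A1mat, A2mat, B1mat, B2mat;
      destruct (lt4 i Hi) as [E|[E|[E|E]]]; destruct (lt4 j Hj) as [E'|[E'|[E'|E']]]; subst; simpl; field; lra.
Qed.
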